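(* Let $f:\mathbb{R}^d\times\mathcal{X}\to\mathbb{R}$ be differentiable in $\theta$, where $\mathcal{X}$ is a subset of a Euclidean space with $\sup_{x\in\mathcal{X}}\Vert x\Vert\le D<\infty$ and $\sup_{x\in\mathcal{X}}\Vert\nabla f(0,x)\Vert\le E<\infty$. Assume (A1): there are $K_1,K_2>0$ with $\Vert\nabla f(\theta,x)-\nabla f(\hat\theta,\hat x)\Vert\le K_1\Vert\theta-\hat\theta\Vert+K_2\Vert x-\hat x\Vert(\Vert\theta\Vert+\Vert\hat\theta\Vert+1)$ for all $\theta,\hat\theta\in\mathbb{R}^d$, $x,\hat x\in\mathcal{X}$; (A2): there is $\mu>0$ with $\langle\nabla f(\theta_1,x)-\nabla f(\theta_2,x),\theta_1-\theta_2\rangle\ge\mu\Vert\theta_1-\theta_2\Vert^2$ for all $\theta_1,\theta_2\in\mathbb{R}^d$, $x\in\mathcal{X}$. Let $X_n=(x_1,\dots,x_n)$, $\hat X_n=(\hat x_1,\dots,\hat x_n)\in\mathcal{X}^n$ differ in at most one index, $b\in\{1,\dots,n\}$, $(\Omega_k)_{k\ge1}$ i.i.d. uniformly random $b$-subsets of $\{1,\dots,n\}$, and $$\theta_k=\theta_{k-1}-\tfrac\eta b\textstyle\sum_{i\in\Omega_k}\nabla f(\theta_{k-1},x_i),\qquad\hat\theta_k=\hat\theta_{k-1}-\tfrac\eta b\sum_{i\in\Omega_k}\nabla f(\hat\theta_{k-1},\hat x_i),$$ with $\theta_0=\hat\theta_0=\theta\in\mathbb{R}^d$. Assume $\eta<\min\left\{\frac1\mu,\frac{\mu}{K_1^2+64D^2K_2^2}\right\}$.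 Let $\nu_k,\hat\nu_k$ be the laws of $\theta_k,\hat\theta_k$. Then for all $k$, $$\mathcal{W}_1(\nu_k,\hat\nu_k)\le\frac{8DK_2\left(1-(1-\frac{\eta\mu}2)^k\right)}{n\mu}\left(\frac{2E}\mu+1\right)\max\left\{1+2\Vert\theta\Vert^2+\frac{2E^2}{\mu^2},\ 2-\frac\eta\mu K_1^2-\frac{56\eta}{\mu}D^2K_2^2+\frac{64\eta}{\mu^3}D^2K_2^2E^2\right\}.$$
   Context: $\mathcal{W}_1$ is the 1-Wasserstein distance between probability measures on $\mathbb{R}^d$. *)

(* Defs.v *)
From HB Require Import structures.
From mathcomp Require Import all_boot all_order all_algebra.
From mathcomp Require Import all_classical all_reals all_analysis.
Set Implicit Arguments. Unset Strict Implicit. Unset Printing Implicit Defensive.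
Import Order.TTheory GRing.Theory Num.Theory.
Import numFieldNormedType.Exports.
Local Open Scope classical_set_scope.
Local Open Scope ring_scope.

Definition edot (R : realType) (d : nat) (u v : 'rV[R]_d) : R :=
  \sum_(i < d) u 0 i * v 0 i.
Definition enorm (R : realType) (d : nat) (u : 'rV[R]_d) : R :=
  Num.sqrt (edot u u).

Definition grad (R : realType) (d m : nat)
  (f : 'rV[R]_d -> 'rV[R]_m -> R) (theta : 'rV[R]_d) (x : 'rV[R]_m) : 'rV[R]_d :=
  \row_(i < d) ('D_(delta_mx 0 i) (f ^~ x) theta).

Definition bsub (n b : nat) := {A : {set 'I_n} | #|A| == b}.

Definition sgd_step (R : realType) (d m n : nat)
  (f : 'rV[R]_d -> 'rV[R]_m -> R) (xs : 'I_n -> 'rV[R]_m) (eta : R) (b : nat)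
  (theta : 'rV[R]_d) (A : {set 'I_n}) : 'rV[R]_d :=
  theta - (eta / b%:R) *: \sum_(i in A) grad f theta (xs i).

(* theta_k as a function of the batches (Omega_1, ..., Omega_k) *)
Definition sgd_iter (R : realType) (d m n b k : nat)
  (f : 'rV[R]_d -> 'rV[R]_m -> R) (xs : 'I_n -> 'rV[R]_m) (eta : R)
  (theta0 : 'rV[R]_d) (om : k.-tuple (bsub n b)) : 'rV[R]_d :=
  foldl (fun th (A : bsub n b) => sgd_step f xs eta b th (val A)) theta0 om.

(* Finitely supported probability laws on R^d as weighted atom lists *)
Definition dlaw (R : realType) (d : nat) := seq ('rV[R]_d * R).
Definition mass (R : realType) (d : nat) (mu : dlaw R d) (x : 'rV[R]_d) : R :=
  \sum_(a <- mu | a.1 == x) a.2.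

Definition unif_law (R : realType) (d : nat) (S : finType) (F : S -> 'rV[R]_d)
  : dlaw R d := [seq (F w, #|S|%:R^-1) | w <- enum S].

(* couplings of two finitely supported laws (every coupling of finitely
   supported measures is finitely supported, on supp mu x supp nu) *)
Definition is_coupling (R : realType) (d : nat) (mu nu : dlaw R d)
  (pi : seq (('rV[R]_d * 'rV[R]_d) * R)) : Prop :=
  [/\ forall a, a \in pi -> 0 <= a.2,
      forall x, \sum_(a <- pi | a.1.1 == x) a.2 = mass mu x &
      forall y, \sum_(a <- pi | a.1.2 == y) a.2 = mass nu y].

Definition W1 (R : realType) (d : nat) (mu nu : dlaw R d) : R :=
  inf [set c : R | exists pi, is_coupling mu nu pi /\
        c = \sum_(a <- pi) a.2 * enorm (a.1.1 - a.1.2)].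

(* Main.v *)
Require Import Defs.
From HB Require Import structures.
From mathcomp Require Import all_boot all_order all_algebra.
From mathcomp Require Import all_classical all_reals all_analysis.
From mathcomp Require Import ring lra perm.
Import Order.TTheory GRing.Theory Num.Theory.
Import numFieldNormedType.Exports.
Local Open Scope classical_set_scope.
Local Open Scope ring_scope.

Set Implicit Arguments. Unset Strict Implicit. Unset Printing Implicit Defensive.

Section Norms.
Variables (R : realType) (d : nat).
Implicit Types (u v w : 'rV[R]_d) (a : R).

Lemma edotC u v : edot u v = edot v u.
Proof. by apply: eq_bigr => i _; rewrite mulrC. Qed.

Lemma edotDl u v w : edot (u + v) w = edot u w + edot v w.
Proof. by rewrite /edot -big_split; apply: eq_bigr => i _; rewrite mxE mulrDl. Qed.

Lemma edotZl a u w : edot (a *: u) w = a * edot u w.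
Proof. by rewrite /edot mulr_sumr; apply: eq_bigr => i _; rewrite mxE mulrA. Qed.

Lemma edotNl u w : edot (- u) w = - edot u w.
Proof. by rewrite -scaleN1r edotZl mulN1r. Qed.

Lemma edotBl u v w : edot (u - v) w = edot u w - edot v w.
Proof. by rewrite edotDl edotNl. Qed.

Lemma edotDr u v w : edot w (u + v) = edot w u + edot w v.
Proof. by rewrite edotC edotDl !(edotC w). Qed.

Lemma edotZr a u w : edot w (a *: u) = a * edot w u.
Proof. by rewrite edotC edotZl edotC. Qed.

Lemma edotBr u v w : edot w (u - v) = edot w u - edot w v.
Proof. by rewrite edotC edotBl !(edotC w). Qed.

Lemma edot_suml (I : finType) (P : pred I) (F : I -> 'rV[R]_d) w :
  edot (\sum_(i | P i) F i) w = \sum_(i | P i) edot (F i) w.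
Proof.
rewrite /edot exchange_big /=; apply: eq_bigr => k _.
by rewrite summxE mulr_suml.
Qed.

Lemma edot0l w : edot 0 w = 0.
Proof. by rewrite /edot big1 // => i _; rewrite mxE mul0r. Qed.

Lemma edot_ge0 u : 0 <= edot u u.
Proof. by apply: sumr_ge0 => i _; rewrite -expr2 sqr_ge0. Qed.

Lemma enorm_ge0 u : 0 <= enorm u.
Proof. exact: sqrtr_ge0. Qed.

Lemma enorm_sq u : enorm u ^+ 2 = edot u u.
Proof. by rewrite /enorm sqr_sqrtr // edot_ge0. Qed.



Lemma le_of_sq (a c : R) : 0 <= c -> a ^+ 2 <= c ^+ 2 -> a <= c.
Proof.
move=> hc h; apply: le_trans (ler_norm a) _.
have := @ler_pXn2r R 2 isT `|a| c; rewrite !nnegrE normr_ge0 hc => /(_ isT isT) <-.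
by rewrite real_normK ?num_real.
Qed.

Lemma CS u v : edot u v <= enorm u * enorm v.
Proof.
have key : edot u v ^+ 2 <= edot u u * edot v v.
  have [v0|vpos] := eqVneq (edot v v) 0.
    have hv : forall i, v 0 i = 0.
      move=> i; apply/eqP; rewrite -sqrf_eq0 expr2.
      have /psumr_eq0P H := v0.
      by apply/eqP; apply: H => //= k _; rewrite -expr2 sqr_ge0.
    have -> : edot u v = 0 by rewrite /edot big1 // => i _; rewrite hv mulr0.
    by rewrite v0 mulr0 expr2 mulr0.
  have vp : 0 < edot v v by rewrite lt0r vpos edot_ge0.
  set t := edot u v / edot v v.
  have h := edot_ge0 (u - t *: v).
  rewrite edotBl !edotBr !edotZl !edotZr (edotC v u) in h.
  have e : edot u v ^+ 2 = t * edot u v * edot v v.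
    rewrite /t; field; by rewrite gt_eqF.
  rewrite e; rewrite -subr_ge0.
  have -> : edot u u * edot v v - t * edot u v * edot v v
            = (edot u u - t * edot u v - t * (edot u v - t * edot v v)) * edot v v.
    rewrite /t; field; by rewrite gt_eqF.
  apply: mulr_ge0; last exact: ltW.
  move: h; lra.
apply: le_of_sq; first by apply: mulr_ge0; apply: enorm_ge0.
by rewrite exprMn !enorm_sq.
Qed.

Lemma enorm_triangle u v : enorm (u + v) <= enorm u + enorm v.
Proof.
apply: le_of_sq; first by rewrite addr_ge0 ?enorm_ge0.
rewrite enorm_sq edotDl !edotDr (edotC v u) sqrrD !enorm_sq.
have := CS u v; lra.
Qed.

Lemma enormZ a u : enorm (a *: u) = `|a| * enorm u.
Proof.
by rewrite /enorm edotZl edotZr mulrA -expr2 sqrtrM ?sqr_ge0 // sqrtr_sqr.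
Qed.

Lemma enormN u : enorm (- u) = enorm u.
Proof. by rewrite -scaleN1r enormZ normrN1 mul1r. Qed.

Lemma enormB u v : enorm (u - v) = enorm (v - u).
Proof. by rewrite -enormN opprB. Qed.

Lemma enorm0 : enorm (0 : 'rV[R]_d) = 0.
Proof. by rewrite /enorm edot0l sqrtr0. Qed.

Lemma enorm_sum (I : finType) (P : pred I) (F : I -> 'rV[R]_d) :
  enorm (\sum_(i | P i) F i) <= \sum_(i | P i) enorm (F i).
Proof.
elim/big_rec2: _ => [|i y x _ h]; first by rewrite enorm0.
by apply: le_trans (enorm_triangle _ _) _; rewrite lerD2l.
Qed.

End Norms.

Section Gen.
Variable R : realType.

Lemma sum_tupleS (T : finType) k (F : k.+1.-tuple T -> R) :
  \sum_(t : k.+1.-tuple T) F t =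
  \sum_(A : T) \sum_(t : k.-tuple T) F [tuple of A :: t].
Proof.
rewrite pair_big /=.
rewrite (reindex (fun p : T * k.-tuple T => [tuple of p.1 :: p.2])) //=.
exists (fun t : k.+1.-tuple T => (thead t, [tuple of behead t])).
  by case=> A t _ /=; congr pair; apply: val_inj.
by move=> t _; case/tupleP: t => A t /=; apply: val_inj.
Qed.

Lemma sum_tuple0 (T : finType) (F : 0.-tuple T -> R) :
  \sum_(t : 0.-tuple T) F t = F [tuple].
Proof.
rewrite (eq_bigr (fun _ => F [tuple])); last by move=> t _; rewrite (tuple0 t).
by rewrite sumr_const card_tuple expn0 mulr1n.
Qed.

Lemma iter_bound (T : finType) (V : Type) (dist : V -> V -> R) (B : V -> Prop)
  (st st' : V -> T -> V) (c : T -> R) (q a : R) :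
  0 <= q -> (forall u A, B u -> B (st u A)) -> (forall v A, B v -> B (st' v A)) ->
  (forall u v A, B u -> B v -> dist (st u A) (st' v A) <= q * dist u v + c A) ->
  \sum_A c A <= #|T|%:R * a ->
  forall k u v, B u -> B v ->
  \sum_(t : k.-tuple T) dist (foldl st u t) (foldl st' v t) <=
    #|T|%:R ^+ k * (q ^+ k * dist u v + a * \sum_(i < k) q ^+ i).
Proof.
move=> q0 hB hB' hst hc; elim=> [|k IH] u v Bu Bv.
  by rewrite sum_tuple0 /= big_ord0 !expr0 !mul1r mulr0 addr0.
rewrite sum_tupleS /=.
set N := #|T|%:R; set S := \sum_(i < k) q ^+ i.
have N0 : 0 <= N by rewrite /N ler0n.
apply: (@le_trans _ _ (\sum_(A : T) N ^+ k * (q ^+ k * dist (st u A) (st' v A) + a * S))).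
  by apply: ler_sum => A _; apply: IH; [apply: hB | apply: hB'].
apply: (@le_trans _ _ (\sum_(A : T) N ^+ k * (q ^+ k * (q * dist u v + c A) + a * S))).

  apply: ler_sum => A _; apply: ler_wpM2l; first exact: exprn_ge0.
  rewrite lerD2r; apply: ler_wpM2l; first exact: exprn_ge0.
  exact: hst.
have e : \sum_(A : T) N ^+ k * (q ^+ k * (q * dist u v + c A) + a * S) =
   N ^+ k * (q ^+ k * q * dist u v * N + q ^+ k * \sum_A c A + a * S * N).
  rewrite -mulr_sumr big_split /= sumr_const -/N.
  under eq_bigr do rewrite mulrDr.
  rewrite big_split /= sumr_const -mulr_sumr -/N.
  rewrite -[_ *+ #|_|]mulr_natr -[a * S *+ _]mulr_natr (_ : #|_|%:R = N) //; clearbody N S; ring.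
rewrite e big_ord_recr /= -/S exprS.
have hq : q ^+ k * \sum_A c A <= q ^+ k * (N * a) by apply: ler_wpM2l; [exact: exprn_ge0|].
have hNk : 0 <= N ^+ k := exprn_ge0 _ N0.
rewrite [X in _ <= X](_ : _ = N ^+ k * (q ^+ k * q * dist u v * N + q ^+ k * (N * a) + a * S * N)); last by rewrite exprSr; ring.
by apply: ler_wpM2l => //; rewrite lerD2r lerD2l.
Qed.


Lemma W1_unif d (S : finType) (F G : S -> 'rV[R]_d) :
  W1 (unif_law F) (unif_law G) <= #|S|%:R^-1 * \sum_w enorm (F w - G w).
Proof.
pose pi := [seq ((F w, G w), (#|S|%:R^-1 : R)) | w <- enum S].
rewrite /W1; set E := [set c : R | _].
have hlb : has_lbound E.
  exists 0 => c [p [[hp _ _] ->]].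
  rewrite big_seq; apply: sumr_ge0 => a ap.
  by apply: mulr_ge0; [exact: hp| exact: sqrtr_ge0].
apply: (ge_inf hlb).
exists pi; split.
  split.
  - by move=> a /mapP [w _ ->] /=; rewrite invr_ge0 ler0n.
  - by move=> x; rewrite /mass /unif_law !big_map.
  - by move=> x; rewrite /mass /unif_law !big_map.
rewrite /pi big_map /= mulr_sumr big_enum /=.
by [].
Qed.

End Gen.

Section Count.
Variables (R : realType) (n b : nat).

Definition bswap (i j : 'I_n) (A : bsub n b) : bsub n b :=
  exist _ (tperm i j @: val A)
    (etrans (congr1 (fun m => m == b) (card_imset _ (@perm_inj _ (tperm i j)))) (valP A)).

Lemma bswapK i j : involutive (bswap i j).
Proof.
move=> A; apply: val_inj => /=; rewrite -imset_comp.
rewrite -[RHS]imset_id; apply: eq_imset => x /=; exact: tpermK.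
Qed.

Lemma mem_bswap i j A : (j \in val (bswap i j A)) = (i \in val A).
Proof. by rewrite /= -{1}(tpermL i j) mem_imset //; exact: perm_inj. Qed.

Lemma count_bsub (j : 'I_n) :
  n%:R * \sum_(A : bsub n b) ((j \in val A)%:R : R) = b%:R * #|{: bsub n b}|%:R.
Proof.
have eq i : \sum_(A : bsub n b) ((i \in val A)%:R : R) =
            \sum_(A : bsub n b) ((j \in val A)%:R : R).
  rewrite (reindex (bswap i j)) /=; last by exists (bswap i j) => A _; rewrite bswapK.
  apply: eq_bigr => A _; rewrite /= -{1}(tpermR i j) mem_imset //; exact: perm_inj.
have : \sum_(i : 'I_n) \sum_(A : bsub n b) ((i \in val A)%:R : R) = b%:R * #|{: bsub n b}|%:R.
  rewrite exchange_big /= (eq_bigr (fun _ => (b%:R : R))); last first.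
    move=> A _; rewrite (eq_bigr (fun i => if i \in val A then 1 else 0)); last first.
      by move=> i _; case: (_ \in _).
    rewrite -big_mkcond /= sumr_const (eqP (valP A)) //.
  by rewrite sumr_const mulr_natr.
rewrite (eq_bigr _ (fun i _ => eq i)) sumr_const card_ord => <-; rewrite mulr_natl; exact: erefl.
Qed.
End Count.

Lemma contract (R : realType) d (mu K1 eta : R) (del De : 'rV[R]_d) :
  0 < mu -> 0 < eta -> eta * mu <= 1 -> eta * K1 ^+ 2 <= mu ->
  mu * enorm del ^+ 2 <= edot De del -> enorm De <= K1 * enorm del ->
  enorm (del - eta *: De) <= (1 - eta * mu / 2) * enorm del.
Proof.
move=> mu0 eta0 h1 h2 hA hL.
apply: le_of_sq; first by apply: mulr_ge0; [lra| exact: enorm_ge0].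
rewrite enorm_sq edotBl !edotBr !edotZl !edotZr (edotC del De).
rewrite -!enorm_sq.
have n0 := enorm_ge0 del; have n1 := enorm_ge0 De.
have hL2 : enorm De ^+ 2 <= K1 ^+ 2 * enorm del ^+ 2 by nra.
set x := enorm del in n0 hA hL hL2 *; set y := enorm De in n1 hL hL2 *.
set p := edot De del in hA *.
have h3 : eta ^+ 2 * y ^+ 2 <= eta * mu * x ^+ 2.
  apply: (le_trans (y := eta ^+ 2 * (K1 ^+ 2 * x ^+ 2))).
    by apply: ler_wpM2l => //; apply: exprn_ge0; lra.
  have hx2 : 0 <= x ^+ 2 by apply: exprn_ge0.
  rewrite mulrA expr2 -(mulrA eta eta) -mulrA -(mulrA eta mu).
  apply: ler_wpM2l; first lra.
  by apply: ler_wpM2r.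
have h4 : eta * (mu * x ^+ 2) <= eta * p by apply: ler_wpM2l => //; lra.
have h5 : 0 <= (eta * mu) ^+ 2 * x ^+ 2 by rewrite -exprMn sqr_ge0.
rewrite exprMn; nra.
Qed.

Lemma invn_mulrn (R : realType) (b : nat) (x : R) : (0 < b)%N -> b%:R^-1 * (x *+ b) = x.
Proof.
by move=> b0; rewrite -[x *+ b]mulr_natr mulrCA mulVf ?mulr1 // pnatr_eq0 -lt0n.
Qed.

Lemma contract_step (R : realType) d m (g : 'rV[R]_d -> 'rV[R]_m -> 'rV[R]_d)
  (X : set 'rV[R]_m) (mu K1 eta : R) n b (zs : 'I_n -> 'rV[R]_m)
  (A : {set 'I_n}) u v :
  0 < mu -> 0 < eta -> eta * mu <= 1 -> eta * K1 ^+ 2 <= mu -> (0 < b)%N ->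
  #|A| = b -> (forall i, X (zs i)) ->
  (forall u v x, X x -> enorm (g u x - g v x) <= K1 * enorm (u - v)) ->
  (forall u v x, X x -> mu * enorm (u - v) ^+ 2 <= edot (g u x - g v x) (u - v)) ->
  enorm (u - v - eta *: (b%:R^-1 *: \sum_(i in A) (g u (zs i) - g v (zs i))))
    <= (1 - eta * mu / 2) * enorm (u - v).
Proof.
move=> mu0 eta0 h1 h2 b0 hA hz hL hM.
have bR : 0 < (b%:R : R) by rewrite ltr0n.
apply: (@contract R d mu K1 eta) => //.
  rewrite edotZl edot_suml.
  apply: (le_trans (y := b%:R^-1 * \sum_(i in A) (mu * enorm (u - v) ^+ 2))).
    by rewrite sumr_const hA invn_mulrn.
  by apply: ler_wpM2l; [rewrite invr_ge0 ltW | apply: ler_sum => i _; apply: hM].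
rewrite enormZ ger0_norm; last by rewrite invr_ge0 ltW.
apply: (le_trans (y := b%:R^-1 * \sum_(i in A) (K1 * enorm (u - v)))).
  apply: ler_wpM2l; first by rewrite invr_ge0 ltW.
  by apply: le_trans (enorm_sum _ _) _; apply: ler_sum => i _; apply: hL.
by rewrite sumr_const hA invn_mulrn.
Qed.

Lemma step_diff (R : realType) d m n (g : 'rV[R]_d -> 'rV[R]_m -> 'rV[R]_d)
  (zs ys : 'I_n -> 'rV[R]_m) (eta : R) (b : nat) (A : {set 'I_n}) u v :
  (u - (eta / b%:R) *: \sum_(i in A) g u (zs i)) -
  (v - (eta / b%:R) *: \sum_(i in A) g v (ys i))
  = (u - v - eta *: (b%:R^-1 *: \sum_(i in A) (g u (zs i) - g v (zs i))))
    - (eta / b%:R) *: \sum_(i in A) (g v (zs i) - g v (ys i)).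
Proof.
rewrite !sumrB; set S1 := \sum_(i in A) _; set S2 := \sum_(i in A) _;
  set S3 := \sum_(i in A) _.
by apply/rowP => k; rewrite !mxE; ring.
Qed.

Lemma step_self (R : realType) d m n (g : 'rV[R]_d -> 'rV[R]_m -> 'rV[R]_d)
  (zs : 'I_n -> 'rV[R]_m) (eta : R) (b : nat) (A : {set 'I_n}) u :
  u - (eta / b%:R) *: \sum_(i in A) g u (zs i)
  = (u - 0 - eta *: (b%:R^-1 *: \sum_(i in A) (g u (zs i) - g 0 (zs i))))
    - (eta / b%:R) *: \sum_(i in A) g 0 (zs i).
Proof.
rewrite !sumrB; set S1 := \sum_(i in A) _; set S2 := \sum_(i in A) _.
by apply/rowP => k; rewrite !mxE; ring.
Qed.

Lemma enorm_subr (R : realType) d (x y : 'rV[R]_d) : enorm (x - y) <= enorm x + enorm y.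
Proof. by rewrite -(enormN y); apply: enorm_triangle. Qed.

Unset Implicit Arguments. Set Strict Implicit.

Theorem theorem3p2 (R : realType) (d m : nat)
  (f : 'rV[R]_d -> 'rV[R]_m -> R) (X : set 'rV[R]_m)
  (D E K1 K2 mu : R)
  (hdiff : forall x, X x -> forall th, differentiable (f ^~ x) th)
  (hD : forall x, X x -> enorm x <= D)
  (hE : forall x, X x -> enorm (grad f 0 x) <= E)
  (hK1 : 0 < K1) (hK2 : 0 < K2)
  (hA1 : forall th th' x x', X x -> X x' ->
     enorm (grad f th x - grad f th' x') <=
       K1 * enorm (th - th') + K2 * enorm (x - x') * (enorm th + enorm th' + 1))
  (hmu : 0 < mu)
  (hA2 : forall th1 th2 x, X x ->
     mu * enorm (th1 - th2) ^+ 2 <= edot (grad f th1 x - grad f th2 x) (th1 - th2))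
  (n b : nat) (xs xs' : 'I_n -> 'rV[R]_m)
  (hxs : forall i, X (xs i)) (hxs' : forall i, X (xs' i))
  (hdiffer : exists j : 'I_n, forall i, i != j -> xs i = xs' i)
  (hb : (1 <= b <= n)%N)
  (eta : R) (heta0 : 0 < eta)
  (heta : eta < Num.min mu^-1 (mu / (K1 ^+ 2 + 64 * D ^+ 2 * K2 ^+ 2)))
  (theta : 'rV[R]_d) (k : nat) :
  W1 (unif_law (@sgd_iter R d m n b k f xs eta theta))
     (unif_law (@sgd_iter R d m n b k f xs' eta theta)) <=
  8 * D * K2 * (1 - (1 - eta * mu / 2) ^+ k) / (n%:R * mu)
  * (2 * E / mu + 1)
  * Num.max (1 + 2 * enorm theta ^+ 2 + 2 * E ^+ 2 / mu ^+ 2)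
            (2 - eta / mu * K1 ^+ 2 - 56 * eta / mu * D ^+ 2 * K2 ^+ 2
               + 64 * eta / mu ^+ 3 * D ^+ 2 * K2 ^+ 2 * E ^+ 2).
Proof.
have [j hj] := hdiffer.
have b0 : (0 < b)%N by case/andP: hb.
have n0 : (0 < n)%N by case/andP: hb => h1 h2; exact: leq_trans h1 h2.
have bR : 0 < (b%:R : R) by rewrite ltr0n.
have nR : 0 < (n%:R : R) by rewrite ltr0n.
move: heta; rewrite lt_min => /andP [hmin1 hmin2].
have D0 : 0 <= D := le_trans (enorm_ge0 _) (hD _ (hxs j)).
have E0 : 0 <= E := le_trans (enorm_ge0 _) (hE _ (hxs j)).
have h1 : eta * mu <= 1.
  have mu_neq0 : mu != 0 by rewrite gt_eqF.
  by apply: ltW; move: hmin1; rewrite -(ltr_pM2r hmu) mulVf.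
have h2 : eta * K1 ^+ 2 <= mu.
  have den : 0 < K1 ^+ 2 + 64 * D ^+ 2 * K2 ^+ 2.
    have : 0 < K1 ^+ 2 by rewrite exprn_gt0.
    have : 0 <= 64 * D ^+ 2 * K2 ^+ 2.
      by apply: mulr_ge0; [apply: mulr_ge0 => //|]; apply: sqr_ge0.
    lra.
  move: hmin2; rewrite ltr_pdivlMr // => h.
  have : 0 <= eta * (64 * D ^+ 2 * K2 ^+ 2).
    by apply: mulr_ge0; [exact: ltW | apply: mulr_ge0; [apply: mulr_ge0 => //|]; apply: sqr_ge0].
  nra.
have hL : forall u v x, X x -> enorm (grad f u x - grad f v x) <= K1 * enorm (u - v).
  move=> u v x Xx; apply: le_trans (hA1 u v x x Xx Xx) _.
  by rewrite subrr enorm0 mulr0 mul0r addr0.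
set q := 1 - eta * mu / 2.
have q0 : 0 <= q by rewrite /q; lra.
set M := enorm theta + 2 * E / mu.
have M0 : 2 * E / mu <= M by rewrite /M lerDr enorm_ge0.
have Mt : enorm theta <= M.
  by rewrite /M lerDl; apply: divr_ge0; [lra | exact: ltW].
set C := K2 * (2 * D) * (2 * M + 1).
have inv : forall zs : 'I_n -> 'rV[R]_m, (forall i, X (zs i)) ->
    forall u (A : bsub n b), enorm u <= M ->
    enorm (sgd_step f zs eta b u (val A)) <= M.
  move=> zs hz u A hu; rewrite /sgd_step step_self.
  apply: le_trans (enorm_subr _ _) _.
  have hA : #|val A| = b by apply/eqP; exact: (valP A).
  have c1 := contract_step u 0 hmu heta0 h1 h2 b0 hA hz hL hA2.
  rewrite subr0 in c1.
  have c2 : enorm ((eta / b%:R) *: \sum_(i in val A) grad f 0 (zs i)) <= eta * E.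
    rewrite enormZ ger0_norm; last by apply: divr_ge0; apply: ltW.
    apply: (le_trans (y := eta / b%:R * \sum_(i in val A) E)).
      apply: ler_wpM2l; first by apply: divr_ge0; apply: ltW.
      by apply: le_trans (enorm_sum _ _) _; apply: ler_sum => i _; apply: hE.
    by rewrite sumr_const hA -mulrA invn_mulrn.
  have c3 : eta * E <= eta * mu / 2 * M.
    apply: le_trans (_ : eta * mu / 2 * (2 * E / mu) <= _).
      by rewrite le_eqVlt; apply/orP; left; apply/eqP; field; rewrite gt_eqF.
    by apply: ler_wpM2l => //; apply: divr_ge0 => //; apply: mulr_ge0; lra.
  have c4 : q * enorm u <= q * M by apply: ler_wpM2l.
  rewrite subr0; move: c1 c2 c3 c4; rewrite /q; lra.
pose cf := fun A : bsub n b => eta / b%:R * ((j \in val A)%:R * C).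
have stp : forall u v (A : bsub n b), enorm u <= M -> enorm v <= M ->
    enorm (sgd_step f xs eta b u (val A) - sgd_step f xs' eta b v (val A))
      <= q * enorm (u - v) + cf A.
  move=> u v A hu hv; rewrite /sgd_step step_diff.
  apply: le_trans (enorm_subr _ _) _.
  have hA : #|val A| = b by apply/eqP; exact: (valP A).
  have c1 := contract_step u v hmu heta0 h1 h2 b0 hA hxs hL hA2.
  apply: lerD => //.
  rewrite enormZ ger0_norm; last by apply: divr_ge0; apply: ltW.
  apply: ler_wpM2l; first by apply: divr_ge0; apply: ltW.
  have gj : enorm (grad f v (xs j) - grad f v (xs' j)) <= C.
    apply: le_trans (hA1 v v (xs j) (xs' j) (hxs j) (hxs' j)) _.
    rewrite subrr enorm0 mulr0 add0r /C.
    have e1 : enorm (xs j - xs' j) <= 2 * D.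
      apply: le_trans (enorm_subr _ _) _.
      by have := hD _ (hxs j); have := hD _ (hxs' j); lra.
    apply: ler_pM.
    - by apply: mulr_ge0; [exact: ltW | exact: enorm_ge0].
    - by apply: addr_ge0; [apply: addr_ge0; apply: enorm_ge0 | ].
    - by apply: ler_wpM2l; [exact: ltW | ].
    - lra.
  case: (boolP (j \in val A)) => hjA.
    rewrite (bigD1 j) //= big1 ?addr0 ?mul1r //.
    move=> i /andP [_ hij]; by rewrite (hj i hij) subrr.
  rewrite big1 ?enorm0 ?mul0r //.
  move=> i hi; have hij : i != j by apply: contraNneq hjA => <-.
  by rewrite (hj i hij) subrr.
have sumc : \sum_(A : bsub n b) cf A <= #|{: bsub n b}|%:R * (eta * C / n%:R).
  have cnt := @count_bsub R n b j.
  rewrite /cf -mulr_sumr -mulr_suml.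
  have -> : \sum_(A : bsub n b) ((j \in val A)%:R : R) = b%:R * #|{: bsub n b}|%:R / n%:R.
    by rewrite -cnt (mulrC n%:R) mulfK // gt_eqF.
  rewrite le_eqVlt; apply/orP; left; apply/eqP; field.
  by rewrite !gt_eqF.
have key := @iter_bound R (bsub n b) 'rV[R]_d (fun u v => enorm (u - v))
  (fun u => enorm u <= M)
  (fun u A => sgd_step f xs eta b u (val A)) (fun u A => sgd_step f xs' eta b u (val A))
  cf q (eta * C / n%:R) q0 (inv xs hxs) (inv xs' hxs') stp sumc k theta theta Mt Mt.
rewrite subrr enorm0 mulr0 add0r in key.
set s := \sum_(i < k) q ^+ i in key.
set N := #|{: bsub n b}|%:R in key.
have s0 : 0 <= s by apply: sumr_ge0 => i _; exact: exprn_ge0.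
have a0 : 0 <= eta * C / n%:R.
  apply: divr_ge0; last exact: ltW.
  apply: mulr_ge0; first exact: ltW.
  apply: mulr_ge0; first by apply: mulr_ge0; [exact: ltW | lra].
  have := le_trans (enorm_ge0 theta) Mt; lra.
apply: le_trans (W1_unif _ _) _.
rewrite card_tuple natrX -/N.
apply: (@le_trans _ _ (eta * C / n%:R * s)).
  have [N0|N0] := eqVneq (N ^+ k) 0.
    by rewrite N0 invr0 mul0r; apply: mulr_ge0.
  rewrite -(mulKf N0 (eta * C / n%:R * s)).
  apply: ler_wpM2l; first by rewrite invr_ge0 exprn_ge0 // /N ler0n.
  exact: key.
have geo : 1 - q ^+ k = eta * mu / 2 * s.
  have := subrX1 q k; rewrite -/s => e.
  have -> : 1 - q ^+ k = - (q ^+ k - 1) by rewrite opprB.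
  by rewrite e /q; ring.
rewrite geo.
set Mx := Num.max _ _.
set t := enorm theta.
have hMx : 1 + 2 * t ^+ 2 + 2 * (E / mu) ^+ 2 <= Mx.
  rewrite /Mx le_max; apply/orP; left.
  by rewrite /t expr_div_n le_eqVlt; apply/orP; left; apply/eqP; ring.
have mu_neq0 : mu != 0 by rewrite gt_eqF.
have n_neq0 : n%:R != 0 :> R by rewrite gt_eqF.
set F := eta * K2 * (2 * D) * s / n%:R.
have F0 : 0 <= F.
  apply: divr_ge0; last exact: ltW.
  apply: mulr_ge0 => //; apply: mulr_ge0; last lra.
  by apply: mulr_ge0; apply: ltW.
have -> : eta * C / n%:R * s = F * (2 * M + 1) by rewrite /F /C; field.
have -> : 8 * D * K2 * (eta * mu / 2 * s) / (n%:R * mu) * (2 * E / mu + 1) * Mx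
   = F * (2 * (2 * (E / mu) + 1) * Mx).
  by rewrite /F; field; rewrite mu_neq0 n_neq0.
apply: ler_wpM2l => //.
have eM : M = t + 2 * (E / mu) by rewrite /M /t mulrA.
rewrite eM.
have e0 : 0 <= E / mu by apply: divr_ge0 => //; exact: ltW.
have t0 : 0 <= t := enorm_ge0 theta.
set e := E / mu in e0 hMx *.
have : (2 * e + 1) * (1 + 2 * t ^+ 2 + 2 * e ^+ 2) <= (2 * e + 1) * Mx.
  by apply: ler_wpM2l => //; lra.
have h6 : 0 <= e * (2 * t ^+ 2 + 2 * e ^+ 2).
  by apply: mulr_ge0 => //; apply: addr_ge0; apply: mulr_ge0 => //; apply: sqr_ge0.
have h7 : 0 <= (2 * t - 1 / 2) ^+ 2 by apply: sqr_ge0.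
have h8 : 0 <= e ^+ 2 by apply: sqr_ge0.
nra.
Qed.
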